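(* Let $(W,\odot,\mathbb{1})$ be a monoid and let $(M,+,\mathbb{0},\otimes)$ be an $\omega$-continuous (left) $W$-module, with module of weightings $\mathrm{Wt}=M^\Sigma$. For every $W$-wgcl program $C$, the transformer $\mathrm{wp}[\![C]\!]$ is (1) monotone: for all $f,g\in\mathrm{Wt}$, $f\preceq g$ implies $\mathrm{wp}[\![C]\!](f)\preceq\mathrm{wp}[\![C]\!](g)$; (2) strict: $\mathrm{wp}[\![C]\!](\mathbb{0})=\mathbb{0}$; (3) additive: for all $f,g\in\mathrm{Wt}$, $\mathrm{wp}[\![C]\!](f+g)=\mathrm{wp}[\![C]\!](f)+\mathrm{wp}[\![C]\!](g)$; (4) if moreover the monoid $W$ is commutative, then $\mathrm{wp}$ is homogeneous: for all $a\in W$ and $f\in\mathrm{Wt}$, $\mathrm{wp}[\![C]\!](a\otimes f)=a\otimes\mathrm{wp}[\![C]\!](f)$ (so that, together with (3), $\mathrm{wp}[\![C]\!]$ is linear).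
   Context: A (left) module over a monoid $(W,\odot,\mathbb{1})$ is a commutative monoid $(M,+,\mathbb{0})$ with an action $\otimes\colon W\times M\to M$ such that $(v\odot w)\otimes a=v\otimes(w\otimes a)$, $v\otimes(a+b)=(v\otimes a)+(v\otimes b)$, $\mathbb{1}\otimes a=a$ and $v\otimes\mathbb{0}=\mathbb{0}$ for all $v,w\in W$, $a,b\in M$. The natural order on $M$ is $a\preceq b$ iff there is $c\in M$ with $a+c=b$; $M$ is naturally ordered if $\preceq$ is a partial order. $M$ is $\omega$-continuous if it is naturally ordered, every increasing $\omega$-chain in $(M,\preceq)$ has a supremum, and addition (in each argument) and, for each fixed $w\in W$, the map $a\mapsto w\otimes a$ preserve suprema of increasing $\omega$-chains. Program states: $\Sigma$ is the set of states (maps from program variables to values); an expression $E$ has value $E(\sigma)$ in state $\sigma$; guards $\varphi$ are predicates on states; $\sigma[x\mapsto v]$ is $\sigma$ with $x$ updated to $v$. $W$-wgcl programs are generated by $C::= x:=E \mid C;C \mid \mathtt{if}(\varphi)\{C\}\mathtt{else}\{C\} \mid \{C\}\oplus\{C\} \mid \mathtt{weight}\ a\ (a\in W) \mid \mathtt{while}(\varphi)\{C\}$. Weightings: $\mathrm{Wt}=M^{\Sigma}$ with pointwise addition, zero $\mathbb{0}$, scalar multiplication $(a\otimes f)(\sigma)=a\otimes f(\sigma)$ and pointwise natural order $\preceq$. $([\varphi]\cdot f)(\sigma)=f(\sigma)$ if $\sigma\models\varphi$ and $\mathbb{0}$ otherwise; $f[x/E](\sigma)=f(\sigma[x\mapsto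 E(\sigma)])$. The weakest preweighting transformer: $\mathrm{wp}[\![x:=E]\!](f)=f[x/E]$; $\mathrm{wp}[\![C_1;C_2]\!](f)=\mathrm{wp}[\![C_1]\!](\mathrm{wp}[\![C_2]\!](f))$; $\mathrm{wp}[\![\mathtt{if}(\varphi)\{C_1\}\mathtt{else}\{C_2\}]\!](f)=[\varphi]\cdot\mathrm{wp}[\![C_1]\!](f)+[\neg\varphi]\cdot\mathrm{wp}[\![C_2]\!](f)$; $\mathrm{wp}[\![\{C_1\}\oplus\{C_2\}]\!](f)=\mathrm{wp}[\![C_1]\!](f)+\mathrm{wp}[\![C_2]\!](f)$; $\mathrm{wp}[\![\mathtt{weight}\ a]\!](f)=a\otimes f$; $\mathrm{wp}[\![\mathtt{while}(\varphi)\{C'\}]\!](f)$ is the least fixed point (w.r.t. $\preceq$) of $X\mapsto[\neg\varphi]\cdot f+[\varphi]\cdot\mathrm{wp}[\![C']\!](X)$. *)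

(* Defs.v *)
From Stdlib Require Import ClassicalEpsilon.
From mathcomp Require Import ssreflect ssrfun ssrbool eqtype.

Set Implicit Arguments.
Unset Strict Implicit.
Unset Printing Implicit Defensive.

Record is_monoid (W : Type) (mul : W -> W -> W) (one : W) : Prop := {
  mon_assoc : forall u v w, mul u (mul v w) = mul (mul u v) w;
  mon_mul1l : forall w, mul one w = w;
  mon_mul1r : forall w, mul w one = w }.

Definition is_commutative (W : Type) (mul : W -> W -> W) : Prop :=
  forall v w, mul v w = mul w v.

Section Module.
Variables (W M : Type) (mul : W -> W -> W) (one : W)
          (add : M -> M -> M) (zero : M) (act : W -> M -> M).

Record is_module : Prop := {
  mod_addA : forall a b c, add a (add b c) = add (add a b) c;
  mod_addC : forall a b, add a b = add b a;
  mod_add0l : forall a, add zero a = a;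
  mod_actM : forall v w a, act (mul v w) a = act v (act w a);
  mod_actD : forall v a b, act v (add a b) = add (act v a) (act v b);
  mod_act1 : forall a, act one a = a;
  mod_act0 : forall v, act v zero = zero }.

Definition nat_le (a b : M) : Prop := exists c, add a c = b.

Definition naturally_ordered : Prop :=
  forall a b, nat_le a b -> nat_le b a -> a = b.

Definition increasing_chain (c : nat -> M) : Prop :=
  forall n, nat_le (c n) (c (S n)).

Definition is_sup (c : nat -> M) (s : M) : Prop :=
  (forall n, nat_le (c n) s) /\
  (forall u, (forall n, nat_le (c n) u) -> nat_le s u).

Record is_omega_continuous_module : Prop := {
  ocm_module : is_module;
  ocm_nat_ordered : naturally_ordered;
  ocm_sup_exists : forall c, increasing_chain c -> exists s, is_sup c s;
  ocm_addl_cont : forall a c s, increasing_chain c -> is_sup c s ->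
      is_sup (fun n => add a (c n)) (add a s);
  ocm_addr_cont : forall a c s, increasing_chain c -> is_sup c s ->
      is_sup (fun n => add (c n) a) (add s a);
  ocm_act_cont : forall w c s, increasing_chain c -> is_sup c s ->
      is_sup (fun n => act w (c n)) (act w s) }.

End Module.

Section Programs.
Variables (Var : eqType) (Val : Type).

Definition state := Var -> Val.

Definition upd (s : state) (x : Var) (v : Val) : state :=
  fun y => if y == x then v else s y.

Inductive prog (W : Type) : Type :=
  | Assign : Var -> (state -> Val) -> prog W
  | Seq : prog W -> prog W -> prog W
  | Ite : (state -> bool) -> prog W -> prog W -> prog W
  | Choice : prog W -> prog W -> prog W
  | Weight : W -> prog W
  | While : (state -> bool) -> prog W -> prog W.

End Programs.

Section Wp.
Variables (Var : eqType) (Val : Type) (W M : Type)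
          (add : M -> M -> M) (zero : M) (act : W -> M -> M).

Definition Wt := state Var Val -> M.

Definition wt_add (f g : Wt) : Wt := fun s => add (f s) (g s).
Definition wt_zero : Wt := fun _ => zero.
Definition wt_scale (a : W) (f : Wt) : Wt := fun s => act a (f s).
Definition wt_le (f g : Wt) : Prop := forall s, nat_le add (f s) (g s).
Definition wt_guard (phi : state Var Val -> bool) (f : Wt) : Wt :=
  fun s => if phi s then f s else zero.
Definition wt_subst (f : Wt) (x : Var) (E : state Var Val -> Val) : Wt :=
  fun s => f (upd s x (E s)).

(** least fixed point w.r.t. wt_le (chosen classically; zero if none exists) *)
Definition is_lfp (F : Wt -> Wt) (X : Wt) : Prop :=
  F X = X /\ (forall Y, F Y = Y -> wt_le X Y).

Definition lfp (F : Wt -> Wt) : Wt :=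
  match excluded_middle_informative (exists X, is_lfp F X) with
  | left h => proj1_sig (constructive_indefinite_description _ h)
  | right _ => wt_zero
  end.

Fixpoint wp (C : prog Var Val W) (f : Wt) : Wt :=
  match C with
  | Assign x E => wt_subst f x E
  | Seq C1 C2 => wp C1 (wp C2 f)
  | Ite phi C1 C2 =>
      wt_add (wt_guard phi (wp C1 f)) (wt_guard (fun s => ~~ phi s) (wp C2 f))
  | Choice C1 C2 => wt_add (wp C1 f) (wp C2 f)
  | Weight a => wt_scale a f
  | While phi C' =>
      lfp (fun X => wt_add (wt_guard (fun s => ~~ phi s) f)
                           (wt_guard phi (wp C' X)))
  end.

End Wp.

(* Main.v *)
Require Import Defs.
From mathcomp Require Import ssreflect ssrfun ssrbool eqtype.
From Stdlib Require Import FunctionalExtensionality ClassicalEpsilon PeanoNat.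

Set Implicit Arguments.
Unset Strict Implicit.
Unset Printing Implicit Defensive.

Section Proof.
Variables (W M : Type) (mul : W -> W -> W) (one : W)
  (add : M -> M -> M) (zero : M) (act : W -> M -> M).
Hypothesis HM : is_omega_continuous_module mul one add zero act.
Variables (Var : eqType) (Val : Type).

Local Notation le := (nat_le add).

Lemma addA a b c : add a (add b c) = add (add a b) c.
Proof. exact: (mod_addA (ocm_module HM)). Qed.
Lemma addC a b : add a b = add b a.
Proof. exact: (mod_addC (ocm_module HM)). Qed.
Lemma add0l a : add zero a = a.
Proof. exact: (mod_add0l (ocm_module HM)). Qed.
Lemma add0r a : add a zero = a.
Proof. by rewrite addC add0l. Qed.
Lemma actD v a b : act v (add a b) = add (act v a) (act v b).
Proof. exact: (mod_actD (ocm_module HM)). Qed.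
Lemma act0 v : act v zero = zero.
Proof. exact: (mod_act0 (ocm_module HM)). Qed.
Lemma actM v w a : act (mul v w) a = act v (act w a).
Proof. exact: (mod_actM (ocm_module HM)). Qed.

Lemma swap4 a b c d : add (add a b) (add c d) = add (add a c) (add b d).
Proof. by rewrite -!addA (addA b c d) (addC b c) -addA. Qed.

Lemma le_refl a : le a a.
Proof. exists zero; exact: add0r. Qed.
Lemma le_trans a b c : le a b -> le b c -> le a c.
Proof. move=> [x <-] [y <-]; exists (add x y); by rewrite addA. Qed.
Lemma le_antisym a b : le a b -> le b a -> a = b.
Proof. exact: (ocm_nat_ordered HM). Qed.
Lemma le0 a : le zero a.
Proof. exists a; exact: add0l. Qed.
Lemma le_add a a' b b' : le a a' -> le b b' -> le (add a b) (add a' b').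
Proof. move=> [x <-] [y <-]; exists (add x y); by rewrite swap4. Qed.
Lemma le_act w a b : le a b -> le (act w a) (act w b).
Proof. move=> [x <-]; exists (act w x); by rewrite actD. Qed.

Lemma sup_unique c s t : is_sup add c s -> is_sup add c t -> s = t.
Proof. move=> [Hs1 Hs2] [Ht1 Ht2]; apply: le_antisym; [exact: Hs2 | exact: Ht2]. Qed.
Lemma sup_const a : is_sup add (fun _ : nat => a) a.
Proof. split=> [n|u H]; [exact: le_refl | exact: H 0]. Qed.
Lemma chain_mono c : increasing_chain add c -> forall m k, m <= k -> le (c m) (c k).
Proof.
move=> Hc m k; elim=> [|k' _ IH]; [exact: le_refl | exact: le_trans IH (Hc k')].
Qed.

Lemma sup_add a b A B : increasing_chain add a -> increasing_chain add b ->
  is_sup add a A -> is_sup add b B -> is_sup add (fun n => add (a n) (b n)) (add A B).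
Proof.
move=> Ha Hb HA HB; split.
  by move=> n; apply: le_add; [exact: HA.1 | exact: HB.1].
move=> u Hu.
have H1 := ocm_addr_cont HM B Ha HA.
apply: H1.2 => m.
have H2 := ocm_addl_cont HM (a m) Hb HB.
apply: H2.2 => n.
apply: le_trans (Hu (Nat.max m n)).
apply: le_add; apply: chain_mono => //; [apply: Nat.le_max_l | apply: Nat.le_max_r].
Qed.

Lemma sup_shift c s : increasing_chain add c -> is_sup add c s ->
  is_sup add (fun n => c (S n)) s.
Proof.
move=> Hc [H1 H2]; split=> [n|u Hu]; first exact: H1.
apply: H2 => n; exact: le_trans (Hc n) (Hu n).
Qed.

Lemma sup_swap (G : nat -> nat -> M) R C T :
  (forall n, is_sup add (G n) (R n)) ->
  (forall k, is_sup add (fun n => G n k) (C k)) -> is_sup add C T -> is_sup add R T.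
Proof.
move=> HR HC HT; split.
  move=> n; apply: (HR n).2 => k; exact: le_trans ((HC k).1 n) (HT.1 k).
move=> u Hu; apply: HT.2 => k; apply: (HC k).2 => n.
exact: le_trans ((HR n).1 k) (Hu n).
Qed.

Local Notation Wt := (Wt Var Val M).
Implicit Types (f g s t X Y : Wt) (c d : nat -> Wt) (F G : Wt -> Wt).

Definition wchain (c : nat -> Wt) := forall n, wt_le add (c n) (c (S n)).
Definition wsup (c : nat -> Wt) (s : Wt) := forall x, is_sup add (fun n => c n x) (s x).
Definition cont (F : Wt -> Wt) :=
  forall c s, wchain c -> wsup c s -> wsup (fun n => F (c n)) (F s).
Definition mono (F : Wt -> Wt) := forall f g, wt_le add f g -> wt_le add (F f) (F g).

Lemma wchain_pt c x : wchain c -> increasing_chain add (fun n => c n x).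
Proof. by move=> H n; exact: H n x. Qed.

Lemma cont_mono F : cont F -> mono F.
Proof.
move=> HF f g Hfg.
pose c n := match n with 0 => f | S _ => g end.
have Hc : wchain c.
  by case=> [|n] x /=; [exact: Hfg | exact: le_refl].
have Hs : wsup c g.
  move=> x; split; last by move=> u Hu; exact: Hu 1.
  by case=> [|n] /=; [exact: Hfg | exact: le_refl].
move=> x; exact: ((HF c g Hc Hs x).1 0).
Qed.

Lemma wt_le_refl f : wt_le add f f.
Proof. move=> x; exact: le_refl. Qed.
Lemma wt_le_antisym f g : wt_le add f g -> wt_le add g f -> f = g.
Proof. move=> H1 H2; apply: functional_extensionality => x; exact: le_antisym. Qed.
Lemma wsup_unique c s t : wsup c s -> wsup c t -> s = t.
Proof. move=> H1 H2; apply: functional_extensionality => x; exact: sup_unique. Qed.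
Lemma wsup_const f : wsup (fun _ => f) f.
Proof. move=> x; exact: sup_const. Qed.
Lemma wchain_const f : wchain (fun _ => f).
Proof. move=> n; exact: wt_le_refl. Qed.

Lemma wt_le_add f f' g g' : wt_le add f f' -> wt_le add g g' ->
  wt_le add (wt_add add f g) (wt_add add f' g').
Proof. move=> H1 H2 x; exact: le_add. Qed.
Lemma wt_le_guard phi f g : wt_le add f g ->
  wt_le add (wt_guard zero phi f) (wt_guard zero phi g).
Proof. move=> H x; rewrite /wt_guard; case: (phi x) => //; exact: le_refl. Qed.
Lemma wchain_add c d : wchain c -> wchain d -> wchain (fun n => wt_add add (c n) (d n)).
Proof. move=> H1 H2 n; exact: wt_le_add. Qed.
Lemma wchain_guard phi c : wchain c -> wchain (fun n => wt_guard zero phi (c n)).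
Proof. move=> H n; exact: wt_le_guard. Qed.
Lemma wchain_mono F c : mono F -> wchain c -> wchain (fun n => F (c n)).
Proof. move=> HF H n; exact: HF. Qed.
Lemma wsup_add c d s t : wchain c -> wchain d -> wsup c s -> wsup d t ->
  wsup (fun n => wt_add add (c n) (d n)) (wt_add add s t).
Proof.
move=> Hc Hd Hs Ht x; rewrite /wt_add.
exact (sup_add (wchain_pt x Hc) (wchain_pt x Hd) (Hs x) (Ht x)).
Qed.
Lemma wsup_guard phi c s : wsup c s ->
  wsup (fun n => wt_guard zero phi (c n)) (wt_guard zero phi s).
Proof. move=> H x; rewrite /wt_guard; case: (phi x); [exact: H | exact: sup_const]. Qed.
Lemma wsup_scale a c s : wchain c -> wsup c s ->
  wsup (fun n => wt_scale act a (c n)) (wt_scale act a s).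
Proof. move=> Hc Hs x; exact (ocm_act_cont HM a (wchain_pt x Hc) (Hs x)). Qed.

Fixpoint kit (F : Wt -> Wt) k : Wt :=
  match k with 0 => wt_zero zero | S k => F (kit F k) end.

Lemma lfp_eq F X : is_lfp add F X -> lfp add zero F = X.
Proof.
move=> HX; rewrite /lfp; case: excluded_middle_informative => [h|h]; last first.
  by exfalso; apply: h; exists X.
case: constructive_indefinite_description => Y HY /=.
apply: wt_le_antisym; [exact: HY.2 X HX.1 | exact: HX.2 Y HY.1].
Qed.

Lemma kleene F : cont F -> wchain (kit F) /\ wsup (kit F) (lfp add zero F).
Proof.
move=> HF; have Hm := cont_mono HF.
have Hc : wchain (kit F).
  elim=> [|k IH] x /=; [exact: le0 | exact: Hm _ _ IH x].
have Hex : forall x, exists v : M, is_sup add (fun k => kit F k x) v.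
  move=> x; exact: ocm_sup_exists HM _ (wchain_pt x Hc).
pose X x := proj1_sig (constructive_indefinite_description _ (Hex x)).
have HX : wsup (kit F) X.
  by move=> x; rewrite /X; case: constructive_indefinite_description.
have Hfix : F X = X.
  apply: wsup_unique (HF _ _ Hc HX) _.
  move=> x; exact: sup_shift (wchain_pt x Hc) (HX x).
have Hleast : forall Y, F Y = Y -> wt_le add X Y.
  move=> Y HY.
  have Hk : forall k, wt_le add (kit F k) Y.
    elim=> [|k IH] x /=; first exact: le0.
    rewrite -HY; exact: Hm _ _ IH x.
  move=> x; apply: (HX x).2 => k; exact: Hk k x.
by rewrite (@lfp_eq F X).
Qed.

Definition WF (phi : state Var Val -> bool) (G : Wt -> Wt) (g X : Wt) : Wt :=
  wt_add add (wt_guard zero (fun st : state Var Val => ~~ phi st) g) (wt_guard zero phi (G X)).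

Lemma WF_joint phi G : cont G -> forall c d g X, wchain c -> wsup c g ->
  wchain d -> wsup d X ->
  wchain (fun n => WF phi G (c n) (d n)) /\ wsup (fun n => WF phi G (c n) (d n)) (WF phi G g X).
Proof.
move=> HG c d g X Hc Hcg Hd HdX; have Hm := cont_mono HG.
have HGd : wchain (fun n => G (d n)) by exact: wchain_mono.
split.
  apply: wchain_add; apply: wchain_guard => //.
apply: wsup_add; try (apply: wchain_guard => //).
  exact: wsup_guard.
apply: wsup_guard; exact: HG.
Qed.

Lemma WF_cont phi G g : cont G -> cont (WF phi G g).
Proof.
move=> HG c s Hc Hs.
exact: (WF_joint phi HG (wchain_const g) (wsup_const g) Hc Hs).2.
Qed.

Definition good (G : Wt -> Wt) :=
  cont G /\ G (wt_zero zero) = wt_zero zero /\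
  (forall f g, G (wt_add add f g) = wt_add add (G f) (G g)) /\
  (is_commutative mul -> forall a f, G (wt_scale act a f) = wt_scale act a (G f)).

Lemma while_good phi G : good G -> good (fun f => lfp add zero (WF phi G f)).
Proof.
move=> [Hc [Hz [Ha Hh]]].
split.
  move=> c s Hcs Hs x.
  have Hstep : forall k, wchain (fun n => kit (WF phi G (c n)) k) /\
      wsup (fun n => kit (WF phi G (c n)) k) (kit (WF phi G s) k).
    elim=> [|k [IH1 IH2]] /=.
      split; [exact: wchain_const | exact: wsup_const].
    exact: WF_joint.
  apply: (@sup_swap (fun n k => kit (WF phi G (c n)) k x) _
            (fun k => kit (WF phi G s) k x)).
  - move=> n; exact: (kleene (WF_cont phi (c n) Hc)).2 x.
  - move=> k; exact: (Hstep k).2 x.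
  - exact: (kleene (WF_cont phi s Hc)).2 x.
split.
  apply: lfp_eq; split.
    rewrite /WF Hz; apply: functional_extensionality => x.
    rewrite /wt_add /wt_guard /wt_zero; case: (phi x) => /=; exact: add0l.
  move=> Y _ x; exact: le0.
split.
  move=> f g.
  have Hk : kit (WF phi G (wt_add add f g)) =
            fun k => wt_add add (kit (WF phi G f) k) (kit (WF phi G g) k).
    apply: functional_extensionality; elim=> [|k IH] /=.
      apply: functional_extensionality => x; rewrite /wt_add /wt_zero; by rewrite add0l.
    rewrite IH /WF Ha; apply: functional_extensionality => x.
    rewrite /wt_add /wt_guard; case: (phi x) => /=; by rewrite ?add0l ?add0r.
  have [Hf1 Hf2] := kleene (WF_cont phi f Hc).
  have [Hg1 Hg2] := kleene (WF_cont phi g Hc).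
  have [_ Hfg] := kleene (WF_cont phi (wt_add add f g) Hc).
  rewrite Hk in Hfg.
  exact: wsup_unique Hfg (wsup_add Hf1 Hg1 Hf2 Hg2).
move=> Hcomm a f.
have Hk : kit (WF phi G (wt_scale act a f)) =
          fun k => wt_scale act a (kit (WF phi G f) k).
  apply: functional_extensionality; elim=> [|k IH] /=.
    apply: functional_extensionality => x; rewrite /wt_scale /wt_zero; by rewrite act0.
  rewrite IH /WF Hh //; apply: functional_extensionality => x.
  rewrite /wt_add /wt_guard /wt_scale; case: (phi x) => /=; by rewrite actD act0.
have [Hf1 Hf2] := kleene (WF_cont phi f Hc).
have [_ Haf] := kleene (WF_cont phi (wt_scale act a f) Hc).
rewrite Hk in Haf.
exact: wsup_unique Haf (wsup_scale a Hf1 Hf2).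
Qed.

Lemma good_wp (C : prog Var Val W) : good (wp add zero act C).
Proof.
elim: C.
- move=> x E; split.
    move=> c s Hc Hs y; exact: Hs (upd y x (E y)).
  by split; [|split].
- move=> C1 [H1c [H1z [H1a H1h]]] C2 [H2c [H2z [H2a H2h]]]; split.
    move=> c s Hc Hs /=; apply: H1c; last exact: H2c.
    exact: wchain_mono (cont_mono H2c) Hc.
  split; first by rewrite /= H2z H1z.
  split; first by move=> f g; rewrite /= H2a H1a.
  by move=> Hcomm a f; rewrite /= H2h // H1h.
- move=> phi C1 [H1c [H1z [H1a H1h]]] C2 [H2c [H2z [H2a H2h]]]; split.
    move=> c s Hc Hs /=.
    apply: wsup_add.
    + apply: wchain_guard; exact: wchain_mono (cont_mono H1c) Hc.
    + apply: wchain_guard; exact: wchain_mono (cont_mono H2c) Hc.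
    + apply: wsup_guard; exact: H1c.
    + apply: wsup_guard; exact: H2c.
  split.
    rewrite /= H1z H2z; apply: functional_extensionality => x.
    rewrite /wt_add /wt_guard /wt_zero; case: (phi x) => /=; exact: add0l.
  split.
    move=> f g; rewrite /= H1a H2a; apply: functional_extensionality => x.
    rewrite /wt_add /wt_guard; case: (phi x) => /=; by rewrite ?add0l ?add0r.
  move=> Hcomm a f; rewrite /= H1h // H2h //; apply: functional_extensionality => x.
  rewrite /wt_add /wt_guard /wt_scale; case: (phi x) => /=; by rewrite actD act0.
- move=> C1 [H1c [H1z [H1a H1h]]] C2 [H2c [H2z [H2a H2h]]]; split.
    move=> c s Hc Hs /=.
    apply: wsup_add.
    + exact: wchain_mono (cont_mono H1c) Hc.
    + exact: wchain_mono (cont_mono H2c) Hc.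
    + exact: H1c.
    + exact: H2c.
  split.
    rewrite /= H1z H2z; apply: functional_extensionality => x.
    rewrite /wt_add /wt_zero; exact: add0l.
  split.
    move=> f g; rewrite /= H1a H2a; apply: functional_extensionality => x.
    rewrite /wt_add; exact: swap4.
  move=> Hcomm a f; rewrite /= H1h // H2h //; apply: functional_extensionality => x.
  rewrite /wt_add /wt_scale; by rewrite actD.
- move=> b; split.
    move=> c s Hc Hs /=; exact: wsup_scale.
  split.
    apply: functional_extensionality => x; rewrite /wt_scale /wt_zero; exact: act0.
  split.
    move=> f g; apply: functional_extensionality => x.
    rewrite /wt_scale /wt_add; exact: actD.
  move=> Hcomm a f; apply: functional_extensionality => x.
  rewrite /= /wt_scale -!actM; by rewrite Hcomm.
- move=> phi C' HC'; exact: (while_good phi HC').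
Qed.

End Proof.

Theorem mainTheorem2 (W M : Type) (mul : W -> W -> W) (one : W)
  (add : M -> M -> M) (zero : M) (act : W -> M -> M)
  (HW : is_monoid mul one)
  (HM : is_omega_continuous_module mul one add zero act)
  (Var : eqType) (Val : Type) (C : prog Var Val W) :
  (forall f g : Wt Var Val M,
      wt_le add f g -> wt_le add (wp add zero act C f) (wp add zero act C g)) /\
  wp add zero act C (@wt_zero Var Val M zero) = @wt_zero Var Val M zero /\
  (forall f g : Wt Var Val M,
      wp add zero act C (wt_add add f g)
      = wt_add add (wp add zero act C f) (wp add zero act C g)) /\
  (is_commutative mul ->
   forall (a : W) (f : Wt Var Val M),
      wp add zero act C (wt_scale act a f) = wt_scale act a (wp add zero act C f)).
Proof.
have [Hc [Hz [Ha Hh]]] := good_wp HM C.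
split; first exact (cont_mono HM Hc).
by split; [|split].
Qed.
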